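(* For every pure three-qubit state $|\phi_{ABC}\rangle$, $$S^{\max}_{total}(|\phi_{ABC}\rangle)+3\,E_W(|\phi_{ABC}\rangle)\le\frac{10}{3},$$ where $S^{\max}_{total}=\max\{S_{AB}+S_{AC},\,S_{AB}+S_{BC},\,S_{AC}+S_{BC}\}$ and $E_W=\min\{\mathcal C_{AB}^2,\mathcal C_{AC}^2,\mathcal C_{BC}^2\}$.
   Context: For a two-qubit state $\rho$ let $t_{kl}=\mathrm{Tr}[\rho\,\sigma_k\otimes\sigma_l]$ ($\sigma_k$ Pauli matrices) and $S(\rho)=\sum_{k,l=1}^3 t_{kl}^2$; $\rho_{ij}$ are the two-qubit reduced states of $|\phi_{ABC}\rangle$ and $S_{ij}=S(\rho_{ij})$. $\mathcal C_{ij}$ is the Wootters concurrence of $\rho_{ij}$: $\mathcal C(\rho)=\max\{0,\lambda_1-\lambda_2-\lambda_3-\lambda_4\}$, with $\lambda_1\ge\dots\ge\lambda_4$ the square roots of the eigenvalues of $\rho(\sigma_2\otimes\sigma_2)\rho^*(\sigma_2\otimes\sigma_2)$. *)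

(* Defs.v *)
From HB Require Import structures.
From mathcomp Require Import all_boot all_order all_algebra.
From mathcomp Require Import reals.
From mathcomp Require Import complex mxtens.
Set Implicit Arguments. Unset Strict Implicit. Unset Printing Implicit Defensive.
Import Order.TTheory GRing.Theory Num.Theory.
Local Open Scope ring_scope.
Local Open Scope complex_scope.

Section QubitDefs.
Variable R : realType.
Local Notation C := (R[i]).

(* A three-qubit pure state: amplitudes psi a b c for |a b c>, a b c in {0,1}. *)
Definition unit_state (psi : 'I_2 -> 'I_2 -> 'I_2 -> C) : Prop :=
  \sum_(a < 2) \sum_(b < 2) \sum_(c < 2) psi a b c * (psi a b c)^* = 1.

Definition adjmx m n (A : 'M[C]_(m, n)) : 'M[C]_(n, m) := (map_mx conjc A)^T.

Definition ket (a : 'I_2) : 'cV[C]_2 := delta_mx a 0.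

Definition ket2 (x y : 'I_2) : 'cV[C]_(2 * 2) := ket x *t ket y.

(* reduced two-qubit states (partial traces of |psi><psi|) *)
Definition red_state (v : 'I_2 -> 'cV[C]_(2 * 2)) : 'M[C]_(2 * 2) :=
  \sum_(k < 2) v k *m adjmx (v k).

Definition rho_AB psi := red_state (fun c => \sum_(a < 2) \sum_(b < 2) psi a b c *: ket2 a b).
Definition rho_AC psi := red_state (fun b => \sum_(a < 2) \sum_(c < 2) psi a b c *: ket2 a c).
Definition rho_BC psi := red_state (fun a => \sum_(b < 2) \sum_(c < 2) psi a b c *: ket2 b c).

Definition sigma1 : 'M[C]_2 := \matrix_(i, j) (if i == j then 0 else 1).
Definition sigma2 : 'M[C]_2 :=
  \matrix_(i, j) (if i == j then 0 else if i == 0 then - Complex 0 1 else Complex 0 1).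
Definition sigma3 : 'M[C]_2 :=
  \matrix_(i, j) (if i == j then (if i == 0 then 1 else -1) else 0).
Definition pauli (k : 'I_3) : 'M[C]_2 :=
  if val k == 0%N then sigma1 else if val k == 1%N then sigma2 else sigma3.

(* t_kl = Tr[rho sigma_k (x) sigma_l]  (a real number for Hermitian rho;
   we record its real part) *)
Definition tcorr (rho : 'M[C]_(2 * 2)) (k l : 'I_3) : R :=
  complex.Re (\tr (rho *m (pauli k *t pauli l))).

Definition Scorr (rho : 'M[C]_(2 * 2)) : R :=
  \sum_(k < 3) \sum_(l < 3) tcorr rho k l ^+ 2.

Definition eigenvalues n (M : 'M[C]_n) : seq C :=
  sval (closed_field_poly_normal (char_poly M)).

(* Wootters concurrence: lambda_i = square roots of the eigenvalues of
   rho (s2 x s2) rho^* (s2 x s2) (these eigenvalues are real and >= 0),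
   sorted decreasingly *)
Definition concurrence (rho : 'M[C]_(2 * 2)) : R :=
  let Y := sigma2 *t sigma2 in
  let M := rho *m Y *m map_mx conjc rho *m Y in
  let l := sort (fun x y : R => y <= x)
             [seq Num.sqrt (complex.Re z) | z <- eigenvalues M] in
  Num.max 0 (l`_0 - l`_1 - l`_2 - l`_3).

Definition S_total_max psi : R :=
  let sAB := Scorr (rho_AB psi) in
  let sAC := Scorr (rho_AC psi) in
  let sBC := Scorr (rho_BC psi) in
  Num.max (sAB + sAC) (Num.max (sAB + sBC) (sAC + sBC)).

Definition E_W psi : R :=
  Num.min (concurrence (rho_AB psi) ^+ 2)
    (Num.min (concurrence (rho_AC psi) ^+ 2) (concurrence (rho_BC psi) ^+ 2)).

End QubitDefs.

(* Main.v *)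
Require Import Defs.
From HB Require Import structures.
From mathcomp Require Import all_boot all_order all_algebra.
From mathcomp Require Import reals.
From mathcomp Require Import complex mxtens.
From mathcomp Require Import ring lra.
Import Order.TTheory GRing.Theory Num.Theory.
Local Open Scope ring_scope.

Set Implicit Arguments. Unset Strict Implicit. Unset Printing Implicit Defensive.
Local Open Scope complex_scope.

Section Core.
Variable R : realType.
Local Notation C := R[i].
Implicit Types psi : 'I_2 -> 'I_2 -> 'I_2 -> C.

Definition i0 : 'I_2 := ord0.
Definition i1 : 'I_2 := ord_max.

Lemma sum2 (F : 'I_2 -> C) : \sum_(i < 2) F i = F i0 + F i1.
Proof. by rewrite big_ord_recr big_ord1; congr (F _ + F _); apply: val_inj. Qed.

Lemma e00 : (i0 == i0) = true. Proof. by []. Qed.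
Lemma e11 : (i1 == i1) = true. Proof. by []. Qed.
Lemma e01 : (i0 == i1) = false. Proof. by []. Qed.
Lemma e10 : (i1 == i0) = false. Proof. by []. Qed.

Definition gA psi a b := \sum_(j<2) \sum_(k<2) psi a j k * conjc (psi b j k).
Definition detA psi := gA psi i0 i0 * gA psi i1 i1 - gA psi i0 i1 * gA psi i1 i0.
Definition swAB psi : 'I_2 -> 'I_2 -> 'I_2 -> C := fun a b c => psi b a c.
Definition swAC psi : 'I_2 -> 'I_2 -> 'I_2 -> C := fun a b c => psi c b a.
Definition swBC psi : 'I_2 -> 'I_2 -> 'I_2 -> C := fun a b c => psi a c b.
Definition detB psi := detA (swAB psi).
Definition detC psi := detA (swAC psi).
Definition Nn psi := \sum_(a<2) \sum_(b<2) \sum_(c<2) psi a b c * conjc (psi a b c).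
Definition TT psi a e := psi a i0 i0 * psi e i1 i1 - psi a i0 i1 * psi e i1 i0
   - psi a i1 i0 * psi e i0 i1 + psi a i1 i1 * psi e i0 i0.
Definition DA psi := TT psi i0 i0 * TT psi i1 i1 - TT psi i0 i1 * TT psi i1 i0.

Definition Wm (al be : C) (a c : 'I_2) : C :=
  if a == i0 then (if c == i0 then al else be) else (if c == i0 then - conjc be else conjc al).
Definition nW (al be : C) := al * conjc al + be * conjc be.
Definition trA al be psi : 'I_2 -> 'I_2 -> 'I_2 -> C :=
  fun a j k => Wm al be a i0 * psi i0 j k + Wm al be a i1 * psi i1 j k.
Definition trB al be psi : 'I_2 -> 'I_2 -> 'I_2 -> C :=
  fun a j k => Wm al be j i0 * psi a i0 k + Wm al be j i1 * psi a i1 k.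
Definition trC al be psi : 'I_2 -> 'I_2 -> 'I_2 -> C :=
  fun a j k => Wm al be k i0 * psi a j i0 + Wm al be k i1 * psi a j i1.

Lemma cjD (x y : C) : conjc (x + y) = conjc x + conjc y. Proof. exact: rmorphD. Qed.
Lemma cjB (x y : C) : conjc (x - y) = conjc x - conjc y. Proof. exact: rmorphB. Qed.
Lemma cjM (x y : C) : conjc (x * y) = conjc x * conjc y. Proof. exact: rmorphM. Qed.
Lemma cjN (x : C) : conjc (- x) = - conjc x. Proof. exact: rmorphN. Qed.
Lemma cjK (x : C) : conjc (conjc x) = x. Proof. exact: conjcK. Qed.
Ltac expand := rewrite ?sum2 /Wm ?e00 ?e11 ?e01 ?e10 /= ?cjD ?cjB ?cjM ?cjN ?cjK.

Lemma trA_detA al be psi : detA (trA al be psi) = nW al be ^+ 2 * detA psi.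
Proof.
rewrite /detA /gA /trA /nW. expand. ring.
Qed.


Lemma trA_detB al be psi : detB (trA al be psi) = nW al be ^+ 2 * detB psi.
Proof. rewrite /detB /detA /gA /trA /swAB /nW. expand. ring. Qed.
Lemma trA_detC al be psi : detC (trA al be psi) = nW al be ^+ 2 * detC psi.
Proof. rewrite /detC /detA /gA /trA /swAC /nW. expand. ring. Qed.
Lemma trA_N al be psi : Nn (trA al be psi) = nW al be * Nn psi.
Proof. rewrite /Nn /trA /nW. expand. ring. Qed.
Lemma trA_DA al be psi : DA (trA al be psi) = nW al be ^+ 2 * DA psi.
Proof. rewrite /DA /TT /trA /nW. expand. ring. Qed.

Lemma trB_detA al be psi : detA (trB al be psi) = nW al be ^+ 2 * detA psi.
Proof. rewrite /detA /gA /trB /nW. expand. ring. Qed.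
Lemma trB_detB al be psi : detB (trB al be psi) = nW al be ^+ 2 * detB psi.
Proof. rewrite /detB /detA /gA /trB /swAB /nW. expand. ring. Qed.
Lemma trB_detC al be psi : detC (trB al be psi) = nW al be ^+ 2 * detC psi.
Proof. rewrite /detC /detA /gA /trB /swAC /nW. expand. ring. Qed.
Lemma trB_N al be psi : Nn (trB al be psi) = nW al be * Nn psi.
Proof. rewrite /Nn /trB /nW. expand. ring. Qed.
Lemma trB_DA al be psi : DA (trB al be psi) = nW al be ^+ 2 * DA psi.
Proof. rewrite /DA /TT /trB /nW. expand. ring. Qed.

Lemma trC_detA al be psi : detA (trC al be psi) = nW al be ^+ 2 * detA psi.
Proof. rewrite /detA /gA /trC /nW. expand. ring. Qed.
Lemma trC_detB al be psi : detB (trC al be psi) = nW al be ^+ 2 * detB psi.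
Proof. rewrite /detB /detA /gA /trC /swAB /nW. expand. ring. Qed.
Lemma trC_detC al be psi : detC (trC al be psi) = nW al be ^+ 2 * detC psi.
Proof. rewrite /detC /detA /gA /trC /swAC /nW. expand. ring. Qed.
Lemma trC_N al be psi : Nn (trC al be psi) = nW al be * Nn psi.
Proof. rewrite /Nn /trC /nW. expand. ring. Qed.
Lemma trC_DA al be psi : DA (trC al be psi) = nW al be ^+ 2 * DA psi.
Proof. rewrite /DA /TT /trC /nW. expand. ring. Qed.

End Core.

Section Md.
Variable R : realType.
Local Notation C := R[i].

Definition md (z : C) : R := complex.Re `|z|.

Lemma normE (z : C) : `|z| = (md z)%:C.
Proof. by rewrite /md normc_def. Qed.

Lemma md_ge0 z : 0 <= md z.
Proof. by rewrite -lecR -normE normr_ge0. Qed.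

Lemma mdM x y : md (x * y) = md x * md y.
Proof. by apply: complexI; rewrite rmorphM /= -!normE normrM. Qed.

Lemma mdD x y : md (x + y) <= md x + md y.
Proof. by rewrite -lecR rmorphD /= -!normE ler_normD. Qed.

Lemma mdN x : md (- x) = md x.
Proof. by rewrite /md normrN. Qed.

Lemma md_eq0 z : md z = 0 -> z = 0.
Proof. by move=> h; apply/eqP; rewrite -normr_eq0 normE h. Qed.

Lemma mdR (r : R) : 0 <= r -> md r%:C = r.
Proof. by move=> h; rewrite /md normc_def /= expr0n /= addr0 sqrtr_sqr ger0_norm. Qed.

Lemma mulcJ (z : C) : z * conjc z = (md z ^+ 2)%:C.
Proof.
case: z => a b; rewrite /md normc_def /= sqr_sqrtr ?addr_ge0 ?sqr_ge0 //.
by simpc; rewrite [b * a]mulrC addNr -!expr2.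
Qed.

Lemma ReM_real (r : R) (x : C) : complex.Re (r%:C * x) = r * complex.Re x.
Proof. by case: x => a b; simpc. Qed.

Lemma ReD (x y : C) : complex.Re (x + y) = complex.Re x + complex.Re y.
Proof. by case: x; case: y. Qed.

End Md.

Section Core2.
Variable R : realType.
Local Notation C := R[i].
Implicit Types psi : 'I_2 -> 'I_2 -> 'I_2 -> C.

Definition Phi psi : R := complex.Re (detA psi + detB psi + detC psi)
   - 3 * md (DA psi) - 2 / 3 * (complex.Re (Nn psi)) ^+ 2.

Lemma nW_real (al be : C) : nW al be = (md al ^+ 2 + md be ^+ 2)%:C.
Proof. by rewrite /nW !mulcJ rmorphD. Qed.

Lemma Phi_scale psi psi' (r : R) : 0 < r ->
  detA psi' = (r ^+ 2)%:C * detA psi ->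
  detB psi' = (r ^+ 2)%:C * detB psi ->
  detC psi' = (r ^+ 2)%:C * detC psi ->
  Nn psi' = r%:C * Nn psi ->
  DA psi' = (r ^+ 2)%:C * DA psi ->
  Phi psi' <= 0 -> Phi psi <= 0.
Proof.
move=> r0 hA hB hC hN hD.
have -> : Phi psi' = r ^+ 2 * Phi psi.
  rewrite /Phi hA hB hC hN hD -!mulrDr !ReM_real mdM mdR ?sqr_ge0 //.
  by rewrite exprMn; ring.
by rewrite pmulr_rle0 // exprn_gt0.
Qed.


Lemma md_gt0 (z : C) : z != 0 -> 0 < md z.
Proof. by move=> nz; rewrite lt_def md_ge0 andbT; apply/eqP => /md_eq0 /eqP; rewrite (negbTE nz). Qed.

Lemma nW_pos (al be : C) : (al != 0) || (be != 0) -> 0 < md al ^+ 2 + md be ^+ 2.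
Proof.
case/orP => /md_gt0 h.
  by apply: ltr_pwDl; rewrite ?sqr_ge0 ?exprn_gt0.
by apply: ltr_pwDr; rewrite ?sqr_ge0 ?exprn_gt0.
Qed.

Lemma Phi_trA al be psi : (al != 0) || (be != 0) ->
  Phi (trA al be psi) <= 0 -> Phi psi <= 0.
Proof.
move=> nz; apply: (@Phi_scale _ _ (md al ^+ 2 + md be ^+ 2)); first exact: nW_pos.
- by rewrite trA_detA nW_real rmorphXn.
- by rewrite trA_detB nW_real rmorphXn.
- by rewrite trA_detC nW_real rmorphXn.
- by rewrite trA_N nW_real.
- by rewrite trA_DA nW_real rmorphXn.
Qed.

Lemma Phi_trB al be psi : (al != 0) || (be != 0) ->
  Phi (trB al be psi) <= 0 -> Phi psi <= 0.
Proof.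
move=> nz; apply: (@Phi_scale _ _ (md al ^+ 2 + md be ^+ 2)); first exact: nW_pos.
- by rewrite trB_detA nW_real rmorphXn.
- by rewrite trB_detB nW_real rmorphXn.
- by rewrite trB_detC nW_real rmorphXn.
- by rewrite trB_N nW_real.
- by rewrite trB_DA nW_real rmorphXn.
Qed.

Lemma Phi_trC al be psi : (al != 0) || (be != 0) ->
  Phi (trC al be psi) <= 0 -> Phi psi <= 0.
Proof.
move=> nz; apply: (@Phi_scale _ _ (md al ^+ 2 + md be ^+ 2)); first exact: nW_pos.
- by rewrite trC_detA nW_real rmorphXn.
- by rewrite trC_detB nW_real rmorphXn.
- by rewrite trC_detC nW_real rmorphXn.
- by rewrite trC_N nW_real.
- by rewrite trC_DA nW_real rmorphXn.
Qed.

Lemma c2 : (2 : R)%:C = 2. Proof. exact: rmorph_nat. Qed.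
Lemma c3 : (3 : R)%:C = 3. Proof. exact: rmorph_nat. Qed.
Lemma mulcJ2 (z : C) : (md z)%:C * (md z)%:C = z * conjc z.
Proof. by rewrite mulcJ rmorphXn. Qed.

Ltac expand2 := rewrite ?sum2 /Wm ?e00 ?e11 ?e01 ?e10 /= ?cjD ?cjB ?cjM ?cjN ?cjK.

Lemma Phi_canon psi : psi i0 i0 i1 = 0 -> psi i0 i1 i0 = 0 -> psi i0 i1 i1 = 0 ->
  Phi psi <= 0.
Proof.
move=> h1 h2 h3.
set l := psi i0 i0 i0; set p := psi i1 i0 i0; set q := psi i1 i0 i1.
set r := psi i1 i1 i0; set s := psi i1 i1 i1.
have E1 : detA psi + detB psi + detC psi = (2 * md l ^+ 2 * (md q ^+ 2 + md r ^+ 2)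
   + 3 * md l ^+ 2 * md s ^+ 2 + 2 * md (p * s - q * r) ^+ 2)%:C.
  rewrite !(rmorphD, rmorphM) /= ?rmorph1 !mulcJ2 /detB /detC /detA /gA /swAB /swAC.
  expand2. rewrite h1 h2 h3 -/l -/p -/q -/r -/s. rewrite ?cjD ?cjB ?cjM. ring.
have E2 : DA psi = - (l * s) ^+ 2.
  rewrite /DA /TT h1 h2 h3 -/l -/p -/q -/r -/s; ring.
have E3 : Nn psi = (md l ^+ 2 + md p ^+ 2 + md q ^+ 2 + md r ^+ 2 + md s ^+ 2)%:C.
  rewrite !(rmorphD, rmorphM) /= !mulcJ2 /Nn. expand2. rewrite h1 h2 h3 -/l -/p -/q -/r -/s. ring.
have w1 : md (p * s - q * r) <= md p * md s + md q * md r.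
  by rewrite -!mdM -(mdN (q * r)); apply: mdD.
have w0 := md_ge0 (p * s - q * r).
rewrite /Phi E1 E2 E3 /= mdN expr2 !mdM.
move: w1 w0; set w := md (p * s - q * r).
have := md_ge0 l; have := md_ge0 p; have := md_ge0 q; have := md_ge0 r; have := md_ge0 s.
set L := md l; set a := md p; set b := md q; set c := md r; set e := md s.
move=> he hc hb ha hL hw1 hw0.
have hw2 : w ^+ 2 <= (a * e + b * c) ^+ 2.
  by rewrite ler_pXn2r // ?nnegrE ?addr_ge0 ?mulr_ge0.
have hbc : 2 * (b * c) <= b ^+ 2 + c ^+ 2.
  by rewrite -subr_ge0; have := sqr_ge0 (b - c); rewrite sqrrB; lra.
have hae : 2 * (a * e) <= a ^+ 2 + e ^+ 2.
  by rewrite -subr_ge0; have := sqr_ge0 (a - e); rewrite sqrrB; lra.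
have hs : a * e + b * c <= (a ^+ 2 + e ^+ 2 + (b ^+ 2 + c ^+ 2)) / 2 by lra.
have hw3 : w ^+ 2 <= ((a ^+ 2 + e ^+ 2 + (b ^+ 2 + c ^+ 2)) / 2) ^+ 2.
  by apply: le_trans hw2 _; rewrite ler_pXn2r //; rewrite ?nnegrE; nra.
move: hs hw3; set K := a ^+ 2 + e ^+ 2; set W := b ^+ 2 + c ^+ 2 => hs hw3.
have hK : 0 <= K by rewrite addr_ge0 ?sqr_ge0.
have hW : 0 <= W by rewrite addr_ge0 ?sqr_ge0.
have hM : 0 <= L * L by rewrite mulr_ge0.
have h1' := sqr_ge0 (L * L - W / 2).
have h2' := mulr_ge0 hM hK.
have h3' := mulr_ge0 hK hW.
have h4' := mulr_ge0 hK hK.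
have -> : L * L + a ^+ 2 + b ^+ 2 + c ^+ 2 + e ^+ 2 = L * L + K + W by rewrite /K /W; ring.
nra.
Qed.

Lemma Phi_stepB psi : psi i0 i0 i1 = 0 -> psi i0 i1 i1 = 0 -> Phi psi <= 0.
Proof.
move=> h1 h3.
have [hg|hg] := eqVneq (psi i0 i1 i0) 0; first exact: Phi_canon.
apply: (@Phi_trB (conjc (psi i0 i0 i0)) (conjc (psi i0 i1 i0))).
  by apply/orP; right; rewrite conjc_eq0.
apply: Phi_canon; rewrite /trB; expand2; rewrite ?h1 ?h3; ring.
Qed.

Lemma Phi_stepC psi : psi i0 i0 i0 * psi i0 i1 i1 - psi i0 i0 i1 * psi i0 i1 i0 = 0 ->
  Phi psi <= 0.
Proof.
move=> hd.
suff [u0 [u1 [nz [h0 h1]]]] : exists u0 u1 : C, ((u0 != 0) || (u1 != 0)) /\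
   (psi i0 i0 i0 * u0 + psi i0 i0 i1 * u1 = 0) /\ (psi i0 i1 i0 * u0 + psi i0 i1 i1 * u1 = 0).
  apply: (@Phi_trC (conjc u1) (- conjc u0)).
    by case/orP: nz => nz; apply/orP; [right|left]; rewrite ?oppr_eq0 conjc_eq0.
  apply: Phi_stepB; rewrite /trC; expand2.
    by rewrite -[RHS]h0; ring.
  by rewrite -[RHS]h1; ring.
have [h00|h00] := eqVneq (psi i0 i0 i0) 0.
  have [h01|h01] := eqVneq (psi i0 i0 i1) 0.
    have [h10|h10] := eqVneq (psi i0 i1 i0) 0.
      exists 1, 0; rewrite oner_eq0 h00 h01 h10; split => //; split; ring.
    exists (psi i0 i1 i1), (- psi i0 i1 i0); rewrite oppr_eq0 h10 orbT h00 h01.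
    split => //; split; ring.
  exists (psi i0 i0 i1), (- psi i0 i0 i0); rewrite h01; split => //.
  split; first ring.
  by rewrite -[RHS]oppr0 -[in RHS]hd; ring.
exists (psi i0 i0 i1), (- psi i0 i0 i0); rewrite oppr_eq0 h00 orbT; split => //.
split; first ring.
by rewrite -[RHS]oppr0 -[in RHS]hd; ring.
Qed.

Lemma Phi_le0 psi : Phi psi <= 0.
Proof.
set d0 := psi i0 i0 i0 * psi i0 i1 i1 - psi i0 i0 i1 * psi i0 i1 i0.
set d1 := psi i1 i0 i0 * psi i1 i1 i1 - psi i1 i0 i1 * psi i1 i1 i0.
set m := psi i0 i0 i0 * psi i1 i1 i1 + psi i0 i1 i1 * psi i1 i0 i0
       - psi i0 i0 i1 * psi i1 i1 i0 - psi i0 i1 i0 * psi i1 i0 i1.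
have key : forall al be, (al != 0) || (be != 0) ->
    al ^+ 2 * d0 + al * be * m + be ^+ 2 * d1 = 0 -> Phi psi <= 0.
  move=> al be nz h; apply: (Phi_trA nz); apply: Phi_stepC.
  by rewrite /trA; expand2; rewrite -h /d0 /d1 /m; ring.
have [h1|h1] := eqVneq d1 0.
  by apply: (key 0 1); rewrite ?oner_eq0 ?orbT // h1; ring.
pose D := m ^+ 2 - 4 * d1 * d0.
pose sq := sqrtc D.
apply: (key 1 ((sq - m) / (2 * d1))); first by rewrite oner_eq0.
have h2 : (2 : C) != 0 by rewrite pnatr_eq0.
have hsq : sq ^+ 2 = D by rewrite sqr_sqrtc.
set be := (sq - m) / (2 * d1).
have h21 : 2 * d1 != 0 by rewrite mulf_neq0.
have hb : 2 * d1 * be = sq - m by rewrite /be mulrC divfK.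
apply: (mulfI h21); rewrite mulr0.
have -> : 2 * d1 * (1 ^+ 2 * d0 + 1 * be * m + be ^+ 2 * d1)
   = (4 * d1 * d0 + 2 * m * (2 * d1 * be) + (2 * d1 * be) ^+ 2) / 2.
  by field.
rewrite hb sqrrB hsq /D.
apply/eqP; rewrite mulf_eq0; apply/orP; left; apply/eqP; ring.
Qed.
End Core2.

Section P1.
Variable R : realType.
Local Notation C := R[i].

Definition Ym : 'M[C]_(2*2) := sigma2 R *t sigma2 R.
Definition tt (v : 'I_2 -> 'cV[C]_(2*2)) c e : C := ((v c)^T *m Ym *m v e) 0 0.

Lemma ord2P (a : 'I_2) : a = i0 \/ a = i1.
Proof. by case: a => [[|[|]]] // ?; [left|right]; apply: val_inj. Qed.

Lemma z0 : (i0 == 0 :> 'I_2) = true. Proof. by []. Qed.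
Lemma z1 : (i1 == 0 :> 'I_2) = false. Proof. by []. Qed.

Lemma s2T a b : sigma2 R b a = - sigma2 R a b.
Proof.
rewrite /sigma2 !mxE.
by case: (ord2P a) => ->; case: (ord2P b) => ->; rewrite ?e00 ?e11 ?e01 ?e10 ?z0 ?z1 ?oppr0 ?opprK.
Qed.

Lemma ci : conjc ('i : C) = - 'i.
Proof. by apply/eqP; rewrite eq_complex /= oppr0 !eqxx. Qed.

Lemma s2J a b : conjc (sigma2 R a b) = - sigma2 R a b.
Proof.
rewrite /sigma2 !mxE.
by case: (ord2P a) => ->; case: (ord2P b) => ->; rewrite ?e00 ?e11 ?e01 ?e10 ?z0 ?z1 ?conjc0 ?oppr0 ?cjN ?ci ?opprK.
Qed.

Lemma YT : Ym^T = Ym.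
Proof.
apply/matrixP => i j; rewrite mxE.
case: (mxtens_indexP i) => i1 i2; case: (mxtens_indexP j) => j1 j2.
by rewrite /Ym !tensmxE [sigma2 R j1 i1]s2T [sigma2 R j2 i2]s2T mulrNN.
Qed.

Lemma YJ : map_mx conjc Ym = Ym.
Proof.
apply/matrixP => i j; rewrite mxE.
case: (mxtens_indexP i) => i1 i2; case: (mxtens_indexP j) => j1 j2.
by rewrite /Ym !tensmxE rmorphM /= !s2J mulrNN.
Qed.


Lemma adjJ (v : 'cV[C]_(2*2)) : map_mx conjc (adjmx v) = v^T.
Proof. by apply/matrixP => i j; rewrite !mxE conjcK. Qed.

Lemma tJ (v : 'I_2 -> 'cV[C]_(2*2)) c e :
  adjmx (v c) *m Ym *m map_mx conjc (v e) = (conjc (tt v c e))%:M.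
Proof.
rewrite [LHS]mx11_scalar; congr (_%:M).
have -> : adjmx (v c) *m Ym *m map_mx conjc (v e) = map_mx conjc ((v c)^T *m Ym *m v e).
  by rewrite !map_mxM YJ /adjmx map_trmx.
by rewrite mxE.
Qed.

Lemma Msum (v : 'I_2 -> 'cV[C]_(2*2)) :
  red_state v *m Ym *m map_mx conjc (red_state v) *m Ym =
  \sum_(c < 2) \sum_(e < 2) conjc (tt v c e) *: (v c *m ((v e)^T *m Ym)).
Proof.
rewrite /red_state raddf_sum /= !mulmx_suml; apply: eq_bigr => c _.
rewrite mulmx_sumr mulmx_suml; apply: eq_bigr => e _.
rewrite map_mxM adjJ.
have -> : v c *m adjmx (v c) *m Ym *m (map_mx conjc (v e) *m (v e)^T) *m Ym
   = v c *m (adjmx (v c) *m Ym *m map_mx conjc (v e)) *m ((v e)^T *m Ym).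
  by rewrite !mulmxA.
by rewrite tJ mul_mx_scalar scalemxAl.
Qed.

Lemma tt_sym (v : 'I_2 -> 'cV[C]_(2*2)) c e : tt v e c = tt v c e.
Proof.
rewrite /tt -[in LHS](trmxK ((v e)^T *m Ym *m v c)) [in LHS]mxE.
by rewrite !trmx_mul trmxK YT mulmxA.
Qed.

Definition fq (v : 'I_2 -> 'cV[C]_(2*2)) := \sum_(c < 2) \sum_(e < 2) conjc (tt v c e) * tt v c e.
Definition dq (v : 'I_2 -> 'cV[C]_(2*2)) := tt v i0 i0 * tt v i1 i1 - tt v i0 i1 * tt v i1 i0.
Definition Mq (v : 'I_2 -> 'cV[C]_(2*2)) :=
  red_state v *m Ym *m map_mx conjc (red_state v) *m Ym.

Lemma tr11 (A : 'M[C]_1) : \tr A = A 0 0.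
Proof. by rewrite /mxtrace big_ord1. Qed.

Lemma trM v : \tr (Mq v) = fq v.
Proof.
rewrite /Mq Msum raddf_sum /= /fq; apply: eq_bigr => c _.
rewrite raddf_sum /=; apply: eq_bigr => e _.
by rewrite mxtraceZ mxtrace_mulC tr11 -/(tt v e c) tt_sym.
Qed.

Lemma sum2m (V : nmodType) (F : 'I_2 -> V) : \sum_(i < 2) F i = F i0 + F i1.
Proof. by rewrite big_ord_recr big_ord1; congr (F _ + F _); apply: val_inj. Qed.

Lemma char2 (z a0 a1 t00 t10 t11 : C) :
  z * a0 = conjc t00 * a0 * t00 + conjc t10 * a0 * t10 + (conjc t10 * a1 * t00 + conjc t11 * a1 * t10) ->
  z * a1 = conjc t00 * a0 * t10 + conjc t10 * a0 * t11 + (conjc t10 * a1 * t10 + conjc t11 * a1 * t11) ->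
  let P := z ^+ 2 - (conjc t00 * t00 + conjc t10 * t10 + (conjc t10 * t10 + conjc t11 * t11)) * z
          + (t00 * t11 - t10 * t10) * conjc (t00 * t11 - t10 * t10) in
  a0 * P = 0 /\ a1 * P = 0.
Proof.
move=> h0 h1 P.
pose c00 := conjc t00 * t00 + conjc t10 * t10.
pose c10 := conjc t10 * t00 + conjc t11 * t10.
pose c01 := conjc t00 * t10 + conjc t10 * t11.
pose c11 := conjc t10 * t10 + conjc t11 * t11.
have e0 : c00 * a0 + c10 * a1 - z * a0 = 0 by rewrite h0 /c00 /c10; ring.
have e1 : c01 * a0 + c11 * a1 - z * a1 = 0 by rewrite h1 /c01 /c11; ring.
split.
  transitivity ((c11 - z) * (c00 * a0 + c10 * a1 - z * a0) - c10 * (c01 * a0 + c11 * a1 - z * a1)).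
    by rewrite /P /c00 /c01 /c10 /c11 ?cjB ?cjM; ring.
  by rewrite e0 e1; ring.
transitivity ((c00 - z) * (c01 * a0 + c11 * a1 - z * a1) - c01 * (c00 * a0 + c10 * a1 - z * a0)).
  by rewrite /P /c00 /c01 /c10 /c11 ?cjB ?cjM; ring.
by rewrite e0 e1; ring.
Qed.

Lemma eig_char v (w : 'rV[C]_(2*2)) z :
  w != 0 -> w *m Mq v = z *: w ->
  z = 0 \/ z ^+ 2 - fq v * z + dq v * conjc (dq v) = 0.
Proof.
move=> wnz; rewrite /Mq Msum => hM.
pose a c := (w *m v c) 0 0.
have hwM : w *m (\sum_(c < 2) \sum_(e < 2) conjc (tt v c e) *: (v c *m ((v e)^T *m Ym)))
   = \sum_(c < 2) \sum_(e < 2) (conjc (tt v c e) * a c) *: ((v e)^T *m Ym).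
  rewrite mulmx_sumr; apply: eq_bigr => c _; rewrite mulmx_sumr; apply: eq_bigr => e _.
  by rewrite -scalemxAr (mulmxA w (v c)) [w *m v c]mx11_scalar mul_scalar_mx scalerA.
have hd : forall d, z * a d = \sum_(c < 2) \sum_(e < 2) conjc (tt v c e) * a c * tt v e d.
  move=> d; have := congr1 (fun X => (X *m v d) 0 0) hM; rewrite /= hwM => H.
  transitivity ((z *: w *m v d) 0 0); first by rewrite -scalemxAl mxE.
  rewrite -H.
  rewrite mulmx_suml summxE; apply: eq_bigr => c _.
  rewrite mulmx_suml summxE; apply: eq_bigr => e _.
  by rewrite -scalemxAl mxE.
have h0 := hd i0; have h1 := hd i1.
rewrite !sum2 in h0 h1.
rewrite /fq /dq !sum2.
have s10 := tt_sym v i1 i0.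
rewrite s10 in h0 h1 *.
move: h0 h1.
set t00 := tt v i0 i0; set t01 := tt v i0 i1; set t11 := tt v i1 i1.
set a0 := a i0; set a1 := a i1 => h0 h1.
have [E0 E1] := char2 h0 h1.
set P := _ - _ + _ in E0 E1 *.
have [/andP [/eqP ha0 /eqP ha1] | ] := boolP ((a0 == 0) && (a1 == 0)).
  left.
  move: hM; rewrite hwM !sum2m -/a0 -/a1 ha0 ha1 !mulr0 !scale0r !addr0 => /eqP.
  by rewrite eq_sym scaler_eq0 (negbTE wnz) orbF => /eqP.
rewrite negb_and => /orP [] nz; right.
  by move/eqP: E0; rewrite mulf_eq0 (negbTE nz) => /eqP.
by move/eqP: E1; rewrite mulf_eq0 (negbTE nz) => /eqP.
Qed.

End P1.

Section P2.
Variable R : realType.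

Lemma list_bound (xs : seq R) (a b : R) :
  size xs = 4%N -> 0 <= b -> b <= a ->
  (forall x, x \in xs -> x = 0 \/ x = a \/ x = b) ->
  \sum_(x <- xs) x ^+ 2 = a ^+ 2 + b ^+ 2 ->
  Num.max 0 ((sort (fun x y : R => y <= x) xs)`_0 - (sort (fun x y : R => y <= x) xs)`_1
     - (sort (fun x y : R => y <= x) xs)`_2 - (sort (fun x y : R => y <= x) xs)`_3) <= a - b.
Proof.
move=> hs hb hab hx hsum; set l := sort _ xs.
have hl : forall x, x \in l -> x = 0 \/ x = a \/ x = b by move=> x; rewrite mem_sort; apply: hx.
have hsl : size l = 4%N by rewrite size_sort.
have hsort : sorted (fun x y : R => y <= x) l.
  by apply: sort_sorted => x y; rewrite le_total.
have hsum' : \sum_(x <- l) x ^+ 2 = a ^+ 2 + b ^+ 2.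
  by rewrite (perm_big xs) ?perm_sort.
move: hl hsort hsum'; rewrite -/l.
case: l hsl => [|l0 [|l1 [|l2 [|l3 [|]]]]] //= _ hl.
rewrite !big_cons big_nil /= !andbT => /and3P [h01 h12 h23] hsum2.
have m0 : l0 = 0 \/ l0 = a \/ l0 = b by apply: hl; rewrite !inE eqxx.
have m1 : l1 = 0 \/ l1 = a \/ l1 = b by apply: hl; rewrite !inE eqxx !orbT.
have m2 : l2 = 0 \/ l2 = a \/ l2 = b by apply: hl; rewrite !inE eqxx !orbT.
have m3 : l3 = 0 \/ l3 = a \/ l3 = b by apply: hl; rewrite !inE eqxx !orbT.
have g3 : 0 <= l3 by case: m3 => [->|[->|->]] //; apply: le_trans hab.
have g2 : 0 <= l2 by apply: le_trans h23.
have g1 : 0 <= l1 by apply: le_trans h12.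
rewrite ge_max subr_ge0 hab /=.
case: m1 => [e1|[e1|e1]].
- have e2 : l2 = 0 by apply/eqP; rewrite eq_le g2 -e1 h12.
  have e3 : l3 = 0 by apply/eqP; rewrite eq_le g3 -e2 h23.
  rewrite e1 e2 e3 in hsum2 *.
  case: m0 => [e0|[e0|e0]]; rewrite e0 in hsum2 *; nra.
- case: m0 => [e0|[e0|e0]]; rewrite e0 e1 in hsum2 h01 *; nra.
- case: m0 => [e0|[e0|e0]]; rewrite e0 e1 in hsum2 h01 *; nra.
Qed.

End P2.

Section P3.
Variable R : realType.
Local Notation C := R[i].
Implicit Types v : 'I_2 -> 'cV[C]_(2*2).

Lemma eig_facts v :
  let s := eigenvalues (Mq v) in
  [/\ size s = 4%N,
      (forall z, z \in s -> z = 0 \/ z ^+ 2 - fq v * z + dq v * conjc (dq v) = 0) &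
      \sum_(z <- s) z = fq v].
Proof.
move=> s.
have hcp : char_poly (Mq v) = \prod_(z <- s) ('X - z%:P).
  rewrite /s /eigenvalues; case: (closed_field_poly_normal _) => r /= hr.
  by rewrite [LHS]hr (monicP (char_poly_monic _)) scale1r.
have hsize : size s = 4%N.
  by have := size_char_poly (Mq v); rewrite hcp size_prod_XsubC => -[].
split => //.
  move=> z zs.
  have : eigenvalue (Mq v) z by rewrite eigenvalue_root_char hcp root_prod_XsubC.
  by case/eigenvalueP => w hw wnz; apply: eig_char wnz hw.
have h1 := char_poly_trace (Mq v) (isT : (0 < 2 * 2)%N).
have h2 : (\prod_(z <- s) ('X - z%:P))`_((size s).-1) = - \sum_(z <- s) z.
  by apply: coefPn_prod_XsubC; rewrite hsize.
rewrite hcp in h1; rewrite hsize in h2.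
by apply: oppr_inj; rewrite -h2 h1 trM.
Qed.

Lemma cJm (t : C) : conjc t * t = (md t ^+ 2)%:C.
Proof. by rewrite mulrC mulcJ. Qed.

Lemma fq_real v : fq v = (md (tt v i0 i0) ^+ 2 + md (tt v i0 i1) ^+ 2
    + (md (tt v i1 i0) ^+ 2 + md (tt v i1 i1) ^+ 2))%:C.
Proof. by rewrite /fq !sum2 !cJm -!rmorphD. Qed.

Lemma conc_bound v :
  concurrence (red_state v) ^+ 2 <= complex.Re (fq v) - 2 * md (dq v).
Proof.
have [hsz hroot hsum] := eig_facts v.
set s := eigenvalues (Mq v) in hsz hroot hsum.
set F := complex.Re (fq v); set G := md (dq v).
have hF : fq v = F%:C by rewrite /F fq_real.
have hG : dq v * conjc (dq v) = (G ^+ 2)%:C by rewrite mulcJ.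
have G0 : 0 <= G by apply: md_ge0.
have GF : 2 * G <= F.
  have key : forall x00 x01 x10 x11 g : R, g <= x00 * x11 + x01 * x10 ->
      2 * g <= x00 ^+ 2 + x01 ^+ 2 + (x10 ^+ 2 + x11 ^+ 2).
    move=> x00 x01 x10 x11 g hg.
    have := sqr_ge0 (x00 - x11); have := sqr_ge0 (x01 - x10); rewrite !sqrrB => h1 h2.
    lra.
  rewrite /F fq_real /= /G /dq; apply: key.
  by rewrite -!mdM -(mdN (tt v i0 i1 * tt v i1 i0)); apply: mdD.
have F0 : 0 <= F by lra.
have D0 : 0 <= F ^+ 2 - 4 * G ^+ 2.
  rewrite subr_ge0.
  have -> : 4 * G ^+ 2 = (2 * G) ^+ 2 by rewrite exprMn; congr (_ * _); rewrite expr2 -natrM.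
  by rewrite ler_pXn2r // ?nnegrE ?mulr_ge0.
set sd := Num.sqrt (F ^+ 2 - 4 * G ^+ 2).
have sd0 : 0 <= sd by apply: sqrtr_ge0.
have sd2 : sd ^+ 2 = F ^+ 2 - 4 * G ^+ 2 by rewrite sqr_sqrtr.
have sdF : sd <= F.
  rewrite -(ler_pXn2r (isT : (0 < 2)%N)) ?nnegrE // sd2.
  by rewrite lerBlDr lerDl mulr_ge0 ?sqr_ge0.
set mp := (F + sd) / 2; set mm := (F - sd) / 2.
have mm0 : 0 <= mm by rewrite /mm divr_ge0 ?subr_ge0.
have mp0 : 0 <= mp by rewrite /mp divr_ge0 ?addr_ge0.
have hz : forall z, z \in s -> z = 0 \/ z = mp%:C \/ z = mm%:C.
  move=> z /hroot [->|h]; first by left.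
  right.
  have : (z - mp%:C) * (z - mm%:C) = 0.
    rewrite -[RHS]h hF hG.
    have -> : (G ^+ 2) = mp * mm.
      rewrite /mp /mm; apply: (@mulfI _ 4); first by rewrite pnatr_eq0.
      have -> : 4 * ((F + sd) / 2 * ((F - sd) / 2)) = F ^+ 2 - sd ^+ 2 by field.
      by rewrite sd2; ring.
    have -> : F = mp + mm by rewrite /mp /mm; field.
    by rewrite !rmorphD !rmorphM /=; ring.
  move/eqP; rewrite mulf_eq0 => /orP [] /eqP h0.
    by left; apply/eqP; rewrite -subr_eq0 h0.
  by right; apply/eqP; rewrite -subr_eq0 h0.
set a := Num.sqrt mp; set b := Num.sqrt mm.
have a2 : a ^+ 2 = mp by rewrite sqr_sqrtr.
have b2 : b ^+ 2 = mm by rewrite sqr_sqrtr.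
have b0 : 0 <= b by apply: sqrtr_ge0.
have ba : b <= a by rewrite ler_sqrt // /mm /mp ler_pM2r // ?invr_gt0 // lerD2l; lra.
have ab : a * b = G.
  rewrite -sqrtrM // /mp /mm.
  have -> : (F + sd) / 2 * ((F - sd) / 2) = G ^+ 2.
    apply: (@mulfI _ 4); first by rewrite pnatr_eq0.
    have -> : 4 * ((F + sd) / 2 * ((F - sd) / 2)) = F ^+ 2 - sd ^+ 2 by field.
    by rewrite sd2; ring.
  by rewrite sqrtr_sqr ger0_norm.
pose xs := [seq Num.sqrt (complex.Re z) | z <- s].
have hxs : size xs = 4%N by rewrite size_map.
have hmem : forall x, x \in xs -> x = 0 \/ x = a \/ x = b.
  move=> x /mapP [z zs ->]; case: (hz z zs) => [->|[->|->]] /=.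
  - by left; rewrite sqrtr0.
  - by right; left.
  - by right; right.
have hsq : \sum_(x <- xs) x ^+ 2 = a ^+ 2 + b ^+ 2.
  rewrite big_map.
  transitivity (\sum_(z <- s) complex.Re z).
    rewrite big_seq_cond [RHS]big_seq_cond; apply: eq_bigr => z /andP [zs _].
    by case: (hz z zs) => [->|[->|->]] /=; rewrite ?sqrtr0 ?expr0n ?sqr_sqrtr.
  have -> : \sum_(z <- s) complex.Re z = complex.Re (\sum_(z <- s) z).
    by elim: (s) => [|y r IH]; rewrite ?big_nil // !big_cons IH ReD.
  by by rewrite hsum -/F a2 b2 /mp /mm; field.
have hb := list_bound hxs b0 ba hmem hsq.
have -> : concurrence (red_state v) = Num.max 0 ((sort (fun x y : R => y <= x) xs)`_0
   - (sort (fun x y : R => y <= x) xs)`_1 - (sort (fun x y : R => y <= x) xs)`_2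
   - (sort (fun x y : R => y <= x) xs)`_3) by [].
move: hb; set c := Num.max _ _ => hb.
have c0 : 0 <= c by rewrite /c le_max lexx.
have : c ^+ 2 <= (a - b) ^+ 2 by rewrite ler_pXn2r // ?nnegrE // subr_ge0.
suff -> : (a - b) ^+ 2 = F - 2 * G by [].
by rewrite sqrrB a2 b2 ab /mp /mm; field.
Qed.

End P3.

Section P4.
Variable R : realType.
Local Notation C := R[i].
Implicit Types phi : 'I_2 -> 'I_2 -> 'I_2 -> C.

Definition xr phi a b c : R := complex.Re (phi a b c).
Definition yr phi a b c : R := complex.Im (phi a b c).
Definition j0 : 'I_3 := ord0.
Definition j1 : 'I_3 := lift ord0 ord0.
Definition j2 : 'I_3 := ord_max.

Lemma sum3 (V : nmodType) (F : 'I_3 -> V) : \sum_(i < 3) F i = F j0 + F j1 + F j2.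
Proof.
by rewrite big_ord_recr sum2m; congr (F _ + F _ + F _); apply: val_inj.
Qed.

Lemma sum4 (F : 'I_(2*2) -> C) :
  \sum_(r < 2*2) F r = \sum_(i < 2) \sum_(j < 2) F (mxtens_index (i, j)).
Proof.
rewrite pair_big /= (reindex (@mxtens_index 2 2)) /=.
  by apply: eq_bigr => -[i j] _.
by exists (@mxtens_unindex 2 2) => x _; rewrite ?mxtens_indexK ?mxtens_unindexK.
Qed.

Definition vBC phi (a : 'I_2) : 'cV[C]_(2*2) :=
  \sum_(b < 2) \sum_(c < 2) phi a b c *: ket2 R b c.

Lemma ket2E (b c j k : 'I_2) :
  ket2 R b c (mxtens_index (j, k)) 0 = ket R b j 0 * ket R c k 0.
Proof.
rewrite [in LHS](_ : (0 : 'I_1) = mxtens_index ((0 : 'I_1), (0 : 'I_1))); last by apply: val_inj.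
exact: (tensmxE (ket R b) (ket R c) j k 0 0).
Qed.

Lemma scE (x : C) (A : 'cV[C]_(2*2)) i j : (x *: A) i j = x * A i j.
Proof. by rewrite mxE. Qed.

Lemma vBC_E phi a j k : vBC phi a (mxtens_index (j, k)) 0 = phi a j k.
Proof.
rewrite /vBC summxE sum2 !summxE !sum2 !scE !ket2E !mxE.
case: (ord2P j) => ->; case: (ord2P k) => ->;
  rewrite ?e00 ?e11 ?e01 ?e10 /= ?mulr1 ?mulr0 ?addr0 ?add0r ?mul0r ?mulr1 //.
Qed.

Lemma tr_coord (v : 'I_2 -> 'cV[C]_(2*2)) (X : 'M[C]_(2*2)) :
  \tr (red_state v *m X) = \sum_(a < 2) \sum_(j < 2) \sum_(k < 2) \sum_(j' < 2) \sum_(k' < 2)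
     v a (mxtens_index (j, k)) 0 * conjc (v a (mxtens_index (j', k')) 0)
       * X (mxtens_index (j', k')) (mxtens_index (j, k)).
Proof.
rewrite /red_state mulmx_suml raddf_sum /=; apply: eq_bigr => a _.
rewrite /mxtrace sum4; apply: eq_bigr => j _; apply: eq_bigr => k _.
rewrite mxE sum4; apply: eq_bigr => j' _; apply: eq_bigr => k' _.
by rewrite mxE big_ord1 !mxE.
Qed.

Lemma tr_BC phi (A B : 'M[C]_2) :
  \tr (rho_BC phi *m (A *t B)) = \sum_(a < 2) \sum_(j < 2) \sum_(k < 2) \sum_(j' < 2) \sum_(k' < 2)
     phi a j k * conjc (phi a j' k') * (A j' j * B k' k).
Proof.
rewrite (_ : rho_BC phi = red_state (vBC phi)) // tr_coord.
apply: eq_bigr => a _; apply: eq_bigr => j _; apply: eq_bigr => k _.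
apply: eq_bigr => j' _; apply: eq_bigr => k' _.
by rewrite !vBC_E tensmxE.
Qed.

Lemma ReMx (x y : C) : complex.Re (x * y) = complex.Re x * complex.Re y - complex.Im x * complex.Im y.
Proof. by case: x => a b; case: y => c d. Qed.
Lemma ImMx (x y : C) : complex.Im (x * y) = complex.Re x * complex.Im y + complex.Im x * complex.Re y.
Proof. by case: x => a b; case: y => c d. Qed.
Lemma ReDx (x y : C) : complex.Re (x + y) = complex.Re x + complex.Re y.
Proof. by case: x => a b; case: y => c d. Qed.
Lemma ImDx (x y : C) : complex.Im (x + y) = complex.Im x + complex.Im y.
Proof. by case: x => a b; case: y => c d. Qed.
Lemma ReNx (x : C) : complex.Re (- x) = - complex.Re x.
Proof. by case: x. Qed.
Lemma ImNx (x : C) : complex.Im (- x) = - complex.Im x.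
Proof. by case: x. Qed.
Lemma ReJx (x : C) : complex.Re (conjc x) = complex.Re x.
Proof. by case: x. Qed.
Lemma ImJx (x : C) : complex.Im (conjc x) = - complex.Im x.
Proof. by case: x. Qed.
Lemma Re0x : complex.Re (0 : C) = 0. Proof. by []. Qed.
Lemma Im0x : complex.Im (0 : C) = 0. Proof. by []. Qed.
Lemma Re1x : complex.Re (1 : C) = 1. Proof. by []. Qed.
Lemma Im1x : complex.Im (1 : C) = 0. Proof. by []. Qed.
Lemma Reix : complex.Re ('i : C) = 0. Proof. by []. Qed.
Lemma Imix : complex.Im ('i : C) = 1. Proof. by []. Qed.

Lemma ReS2 (F : 'I_2 -> C) : complex.Re (\sum_(i < 2) F i) = \sum_(i < 2) complex.Re (F i).
Proof. by rewrite !sum2 ReDx sum2m. Qed.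

Definition rs1 (i j : 'I_2) : R := if i == j then 0 else 1.
Definition is1 (i j : 'I_2) : R := 0.
Definition rs2 (i j : 'I_2) : R := 0.
Definition is2 (i j : 'I_2) : R := if i == j then 0 else if i == i0 then -1 else 1.
Definition rs3 (i j : 'I_2) : R := if i == j then (if i == i0 then 1 else -1) else 0.
Definition is3 (i j : 'I_2) : R := 0.
Definition rp (k : 'I_3) := if val k == 0%N then rs1 else if val k == 1%N then rs2 else rs3.
Definition ip (k : 'I_3) := if val k == 0%N then is1 else if val k == 1%N then is2 else is3.

Lemma Rpauli k i j : complex.Re (pauli R k i j) = rp k i j.
Proof.
rewrite /pauli /rp; case: ifP => _; last case: ifP => _;
  rewrite /sigma1 /sigma2 /sigma3 /rs1 /rs2 /rs3 !mxE;
  by case: (ord2P i) => ->; case: (ord2P j) => ->; rewrite ?e00 ?e11 ?e01 ?e10 ?z0 ?z1 /= ?oppr0.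
Qed.

Lemma Ipauli k i j : complex.Im (pauli R k i j) = ip k i j.
Proof.
rewrite /pauli /ip; case: ifP => _; last case: ifP => _;
  rewrite /sigma1 /sigma2 /sigma3 /is1 /is2 /is3 !mxE;
  by case: (ord2P i) => ->; case: (ord2P j) => ->; rewrite ?e00 ?e11 ?e01 ?e10 ?z0 ?z1 /= ?oppr0.
Qed.

Lemma tcorr_BC phi k l : tcorr (rho_BC phi) k l =
  \sum_(a < 2) \sum_(j < 2) \sum_(m < 2) \sum_(j' < 2) \sum_(m' < 2)
   ((xr phi a j m * xr phi a j' m' + yr phi a j m * yr phi a j' m')
      * (rp k j' j * rp l m' m - ip k j' j * ip l m' m)
    - (yr phi a j m * xr phi a j' m' - xr phi a j m * yr phi a j' m')
      * (rp k j' j * ip l m' m + ip k j' j * rp l m' m)).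
Proof.
rewrite /tcorr tr_BC ReS2; apply: eq_bigr => a _.
rewrite ReS2; apply: eq_bigr => j _; rewrite ReS2; apply: eq_bigr => m _.
rewrite ReS2; apply: eq_bigr => j' _; rewrite ReS2; apply: eq_bigr => m' _.
rewrite !(ReMx, ImMx, ReJx, ImJx, Rpauli, Ipauli) /xr /yr.
ring.
Qed.

Ltac tc_tac := rewrite tcorr_BC !sum2m /rp /ip /= /rs1 /rs2 /rs3 /is1 /is2 /is3
   ?e00 ?e11 ?e01 ?e10; ring.

Definition PBC00 phi : R := (2%:R * (xr phi i0 i0 i0) * (xr phi i0 i1 i1) + 2%:R * (xr phi i0 i0 i1) * (xr phi i0 i1 i0) + 2%:R * (xr phi i1 i0 i0) * (xr phi i1 i1 i1) + 2%:R * (xr phi i1 i0 i1) * (xr phi i1 i1 i0) + 2%:R * (yr phi i0 i0 i0) * (yr phi i0 i1 i1) + 2%:R * (yr phi i0 i0 i1) * (yr phi i0 i1 i0) + 2%:R * (yr phi i1 i0 i0) * (yr phi i1 i1 i1) + 2%:R * (yr phi i1 i0 i1) * (yr phi i1 i1 i0)).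

Lemma tBC_00 phi : tcorr (rho_BC phi) j0 j0 = PBC00 phi.
Proof. rewrite /PBC00; tc_tac. Qed.

Definition PBC01 phi : R := (2%:R * (xr phi i0 i0 i0) * (yr phi i0 i1 i1) - 2%:R * (xr phi i0 i0 i1) * (yr phi i0 i1 i0) + 2%:R * (xr phi i0 i1 i0) * (yr phi i0 i0 i1) - 2%:R * (xr phi i0 i1 i1) * (yr phi i0 i0 i0) + 2%:R * (xr phi i1 i0 i0) * (yr phi i1 i1 i1) - 2%:R * (xr phi i1 i0 i1) * (yr phi i1 i1 i0) + 2%:R * (xr phi i1 i1 i0) * (yr phi i1 i0 i1) - 2%:R * (xr phi i1 i1 i1) * (yr phi i1 i0 i0)).

Lemma tBC_01 phi : tcorr (rho_BC phi) j0 j1 = PBC01 phi.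
Proof. rewrite /PBC01; tc_tac. Qed.

Definition PBC02 phi : R := (2%:R * (xr phi i0 i0 i0) * (xr phi i0 i1 i0) - 2%:R * (xr phi i0 i0 i1) * (xr phi i0 i1 i1) + 2%:R * (xr phi i1 i0 i0) * (xr phi i1 i1 i0) - 2%:R * (xr phi i1 i0 i1) * (xr phi i1 i1 i1) + 2%:R * (yr phi i0 i0 i0) * (yr phi i0 i1 i0) - 2%:R * (yr phi i0 i0 i1) * (yr phi i0 i1 i1) + 2%:R * (yr phi i1 i0 i0) * (yr phi i1 i1 i0) - 2%:R * (yr phi i1 i0 i1) * (yr phi i1 i1 i1)).

Lemma tBC_02 phi : tcorr (rho_BC phi) j0 j2 = PBC02 phi.
Proof. rewrite /PBC02; tc_tac. Qed.

Definition PBC10 phi : R := (2%:R * (xr phi i0 i0 i0) * (yr phi i0 i1 i1) + 2%:R * (xr phi i0 i0 i1) * (yr phi i0 i1 i0) - 2%:R * (xr phi i0 i1 i0) * (yr phi i0 i0 i1) - 2%:R * (xr phi i0 i1 i1) * (yr phi i0 i0 i0) + 2%:R * (xr phi i1 i0 i0) * (yr phi i1 i1 i1) + 2%:R * (xr phi i1 i0 i1) * (yr phi i1 i1 i0) - 2%:R * (xr phi i1 i1 i0) * (yr phi i1 i0 i1) - 2%:R * (xr phi i1 i1 i1) * (yr phi i1 i0 i0)).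

Lemma tBC_10 phi : tcorr (rho_BC phi) j1 j0 = PBC10 phi.
Proof. rewrite /PBC10; tc_tac. Qed.

Definition PBC11 phi : R := (- 2%:R * (xr phi i0 i0 i0) * (xr phi i0 i1 i1) + 2%:R * (xr phi i0 i0 i1) * (xr phi i0 i1 i0) - 2%:R * (xr phi i1 i0 i0) * (xr phi i1 i1 i1) + 2%:R * (xr phi i1 i0 i1) * (xr phi i1 i1 i0) - 2%:R * (yr phi i0 i0 i0) * (yr phi i0 i1 i1) + 2%:R * (yr phi i0 i0 i1) * (yr phi i0 i1 i0) - 2%:R * (yr phi i1 i0 i0) * (yr phi i1 i1 i1) + 2%:R * (yr phi i1 i0 i1) * (yr phi i1 i1 i0)).

Lemma tBC_11 phi : tcorr (rho_BC phi) j1 j1 = PBC11 phi.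
Proof. rewrite /PBC11; tc_tac. Qed.

Definition PBC12 phi : R := (2%:R * (xr phi i0 i0 i0) * (yr phi i0 i1 i0) - 2%:R * (xr phi i0 i0 i1) * (yr phi i0 i1 i1) - 2%:R * (xr phi i0 i1 i0) * (yr phi i0 i0 i0) + 2%:R * (xr phi i0 i1 i1) * (yr phi i0 i0 i1) + 2%:R * (xr phi i1 i0 i0) * (yr phi i1 i1 i0) - 2%:R * (xr phi i1 i0 i1) * (yr phi i1 i1 i1) - 2%:R * (xr phi i1 i1 i0) * (yr phi i1 i0 i0) + 2%:R * (xr phi i1 i1 i1) * (yr phi i1 i0 i1)).

Lemma tBC_12 phi : tcorr (rho_BC phi) j1 j2 = PBC12 phi.
Proof. rewrite /PBC12; tc_tac. Qed.

Definition PBC20 phi : R := (2%:R * (xr phi i0 i0 i0) * (xr phi i0 i0 i1) - 2%:R * (xr phi i0 i1 i0) * (xr phi i0 i1 i1) + 2%:R * (xr phi i1 i0 i0) * (xr phi i1 i0 i1) - 2%:R * (xr phi i1 i1 i0) * (xr phi i1 i1 i1) + 2%:R * (yr phi i0 i0 i0) * (yr phi i0 i0 i1) - 2%:R * (yr phi i0 i1 i0) * (yr phi i0 i1 i1) + 2%:R * (yr phi i1 i0 i0) * (yr phi i1 i0 i1) - 2%:R * (yr phi i1 i1 i0) * (yr phi i1 i1 i1)).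

Lemma tBC_20 phi : tcorr (rho_BC phi) j2 j0 = PBC20 phi.
Proof. rewrite /PBC20; tc_tac. Qed.

Definition PBC21 phi : R := (2%:R * (xr phi i0 i0 i0) * (yr phi i0 i0 i1) - 2%:R * (xr phi i0 i0 i1) * (yr phi i0 i0 i0) - 2%:R * (xr phi i0 i1 i0) * (yr phi i0 i1 i1) + 2%:R * (xr phi i0 i1 i1) * (yr phi i0 i1 i0) + 2%:R * (xr phi i1 i0 i0) * (yr phi i1 i0 i1) - 2%:R * (xr phi i1 i0 i1) * (yr phi i1 i0 i0) - 2%:R * (xr phi i1 i1 i0) * (yr phi i1 i1 i1) + 2%:R * (xr phi i1 i1 i1) * (yr phi i1 i1 i0)).

Lemma tBC_21 phi : tcorr (rho_BC phi) j2 j1 = PBC21 phi.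
Proof. rewrite /PBC21; tc_tac. Qed.

Definition PBC22 phi : R := ((xr phi i0 i0 i0) ^+ 2 - (xr phi i0 i0 i1) ^+ 2 - (xr phi i0 i1 i0) ^+ 2 + (xr phi i0 i1 i1) ^+ 2 + (xr phi i1 i0 i0) ^+ 2 - (xr phi i1 i0 i1) ^+ 2 - (xr phi i1 i1 i0) ^+ 2 + (xr phi i1 i1 i1) ^+ 2 + (yr phi i0 i0 i0) ^+ 2 - (yr phi i0 i0 i1) ^+ 2 - (yr phi i0 i1 i0) ^+ 2 + (yr phi i0 i1 i1) ^+ 2 + (yr phi i1 i0 i0) ^+ 2 - (yr phi i1 i0 i1) ^+ 2 - (yr phi i1 i1 i0) ^+ 2 + (yr phi i1 i1 i1) ^+ 2).

Lemma tBC_22 phi : tcorr (rho_BC phi) j2 j2 = PBC22 phi.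
Proof. rewrite /PBC22; tc_tac. Qed.

Lemma SBC_E phi : Scorr (rho_BC phi) = (PBC00 phi) ^+ 2 + (PBC01 phi) ^+ 2 + (PBC02 phi) ^+ 2 + (PBC10 phi) ^+ 2 + (PBC11 phi) ^+ 2 + (PBC12 phi) ^+ 2 + (PBC20 phi) ^+ 2 + (PBC21 phi) ^+ 2 + (PBC22 phi) ^+ 2.

Proof. by rewrite /Scorr !sum3 tBC_00 tBC_01 tBC_02 tBC_10 tBC_11 tBC_12 tBC_20 tBC_21 tBC_22; ring. Qed.


End P4.

Section P5.
Variable R : realType.
Local Notation C := R[i].
Implicit Types phi : 'I_2 -> 'I_2 -> 'I_2 -> C.

Lemma bil (u w : 'cV[C]_(2*2)) (X : 'M[C]_(2*2)) :
  (u^T *m X *m w) 0 0 = \sum_(j' < 2) \sum_(k' < 2) \sum_(j < 2) \sum_(k < 2)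
     u (mxtens_index (j, k)) 0 * X (mxtens_index (j, k)) (mxtens_index (j', k'))
       * w (mxtens_index (j', k')) 0.
Proof.
rewrite mxE sum4; apply: eq_bigr => j' _; apply: eq_bigr => k' _.
rewrite mxE sum4 mulr_suml; apply: eq_bigr => j _; rewrite mulr_suml.
by apply: eq_bigr => k _; rewrite mxE.
Qed.

Definition ep (i j : 'I_2) : C := if i == j then 0 else if i == i0 then 1 else -1.

Lemma Yent j k j' k' : Ym R (mxtens_index (j, k)) (mxtens_index (j', k')) = - (ep j j' * ep k k').
Proof.
rewrite /Ym tensmxE /sigma2 /ep !mxE.
case: (ord2P j) => ->; case: (ord2P j') => ->; case: (ord2P k) => ->; case: (ord2P k') => ->;
  rewrite ?e00 ?e11 ?e01 ?e10 ?z0 ?z1 ?mul0r ?mulr0 ?oppr0 //;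
  rewrite ?mulNr ?mulrN ?opprK -?expr2 ?sqr_i ?opprK ?mulr1 ?expr1n //.
Qed.

Lemma tt_vBC phi a e : tt (vBC phi) a e = - TT phi a e.
Proof.
rewrite /tt bil.
transitivity (\sum_(j' < 2) \sum_(k' < 2) \sum_(j < 2) \sum_(k < 2)
   phi a j k * (- (ep j j' * ep k k')) * phi e j' k').
  apply: eq_bigr => j' _; apply: eq_bigr => k' _; apply: eq_bigr => j _; apply: eq_bigr => k _.
  by rewrite !vBC_E Yent.
rewrite !sum2 /ep ?e00 ?e11 ?e01 ?e10 /TT; ring.
Qed.

Lemma dq_vBC phi : dq (vBC phi) = DA phi.
Proof. by rewrite /dq !tt_vBC /DA; ring. Qed.

Lemma md2 (z : C) : md z ^+ 2 = complex.Re z ^+ 2 + complex.Im z ^+ 2.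
Proof.
rewrite /md normc_def /= sqr_sqrtr //; exact: addr_ge0 (sqr_ge0 _) (sqr_ge0 _).
Qed.

Definition RTT phi a e : R :=
  xr phi a i0 i0 * xr phi e i1 i1 - yr phi a i0 i0 * yr phi e i1 i1
  - (xr phi a i0 i1 * xr phi e i1 i0 - yr phi a i0 i1 * yr phi e i1 i0)
  - (xr phi a i1 i0 * xr phi e i0 i1 - yr phi a i1 i0 * yr phi e i0 i1)
  + (xr phi a i1 i1 * xr phi e i0 i0 - yr phi a i1 i1 * yr phi e i0 i0).
Definition ITT phi a e : R :=
  xr phi a i0 i0 * yr phi e i1 i1 + yr phi a i0 i0 * xr phi e i1 i1
  - (xr phi a i0 i1 * yr phi e i1 i0 + yr phi a i0 i1 * xr phi e i1 i0)
  - (xr phi a i1 i0 * yr phi e i0 i1 + yr phi a i1 i0 * xr phi e i0 i1)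
  + (xr phi a i1 i1 * yr phi e i0 i0 + yr phi a i1 i1 * xr phi e i0 i0).

Lemma ReTT phi a e : complex.Re (TT phi a e) = RTT phi a e.
Proof. by rewrite /TT !(ReDx, ReNx, ReMx) /RTT /xr /yr. Qed.
Lemma ImTT phi a e : complex.Im (TT phi a e) = ITT phi a e.
Proof. by rewrite /TT !(ImDx, ImNx, ImMx) /ITT /xr /yr. Qed.

Lemma Refq phi : complex.Re (fq (vBC phi)) =
  RTT phi i0 i0 ^+ 2 + ITT phi i0 i0 ^+ 2 + (RTT phi i0 i1 ^+ 2 + ITT phi i0 i1 ^+ 2)
  + (RTT phi i1 i0 ^+ 2 + ITT phi i1 i0 ^+ 2 + (RTT phi i1 i1 ^+ 2 + ITT phi i1 i1 ^+ 2)).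
Proof. by rewrite fq_real /= !tt_vBC !mdN !md2 !ReTT !ImTT. Qed.

Definition Rg phi a b : R := \sum_(j < 2) \sum_(k < 2) (xr phi a j k * xr phi b j k + yr phi a j k * yr phi b j k).
Definition Ig phi a b : R := \sum_(j < 2) \sum_(k < 2) (yr phi a j k * xr phi b j k - xr phi a j k * yr phi b j k).

Lemma Re_gA phi a b : complex.Re (gA phi a b) = Rg phi a b.
Proof.
rewrite /gA ReS2 /Rg; apply: eq_bigr => j _; rewrite ReS2; apply: eq_bigr => k _.
by rewrite ReMx ReJx ImJx /xr /yr; ring.
Qed.
Lemma Im_gA phi a b : complex.Im (gA phi a b) = Ig phi a b.
Proof.
rewrite /gA /Ig !sum2 !ImDx sum2m; congr (_ + _); rewrite sum2m;
  by rewrite ?ImDx !ImMx !ReJx !ImJx /xr /yr; congr (_ + _); ring.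
Qed.

Lemma Re_detA phi : complex.Re (detA phi) =
  Rg phi i0 i0 * Rg phi i1 i1 - Ig phi i0 i0 * Ig phi i1 i1
  - (Rg phi i0 i1 * Rg phi i1 i0 - Ig phi i0 i1 * Ig phi i1 i0).
Proof. by rewrite /detA ReDx ReNx !ReMx !Re_gA !Im_gA. Qed.

Lemma Re_Nn phi : complex.Re (Nn phi) =
  \sum_(a < 2) \sum_(b < 2) \sum_(c < 2) (xr phi a b c ^+ 2 + yr phi a b c ^+ 2).
Proof.
rewrite /Nn ReS2; apply: eq_bigr => a _; rewrite ReS2; apply: eq_bigr => b _.
rewrite ReS2; apply: eq_bigr => c _.
by rewrite ReMx ReJx ImJx /xr /yr; ring.
Qed.

End P5.

Section P6.
Variable R : realType.
Local Notation C := R[i].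
Implicit Types psi : 'I_2 -> 'I_2 -> 'I_2 -> C.

Definition pC psi : 'I_2 -> 'I_2 -> 'I_2 -> C := fun a b c => psi b c a.


Lemma ident1 psi :
  Scorr (rho_BC (pC psi)) + Scorr (rho_BC (swAB psi)) + 3 * complex.Re (fq (vBC psi))
  = 2 * complex.Re (Nn psi) ^+ 2 + 2 * complex.Re (detA psi + detB psi + detC psi).
Proof.
rewrite !SBC_E Refq !ReDx /detB /detC !ReNx !ReMx !Re_gA !Im_gA Re_Nn.
rewrite /PBC00 /PBC01 /PBC02 /PBC10 /PBC11 /PBC12 /PBC20 /PBC21 /PBC22 /RTT /ITT /Rg /Ig !sum2m.
rewrite /xr /yr /pC /swAB /swAC /=.
ring.
Qed.

Lemma ident2 psi :
  Scorr (rho_BC (pC psi)) + Scorr (rho_BC psi) + 3 * complex.Re (fq (vBC (swAB psi)))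
  = 2 * complex.Re (Nn (swAB psi)) ^+ 2
    + 2 * complex.Re (detA (swAB psi) + detB (swAB psi) + detC (swAB psi)).
Proof.
rewrite !SBC_E Refq !ReDx /detB /detC !ReNx !ReMx !Re_gA !Im_gA Re_Nn.
rewrite /PBC00 /PBC01 /PBC02 /PBC10 /PBC11 /PBC12 /PBC20 /PBC21 /PBC22 /RTT /ITT /Rg /Ig !sum2m.
rewrite /xr /yr /pC /swAB /swAC /=.
ring.
Qed.

Lemma ident3 psi :
  Scorr (rho_BC (swAB psi)) + Scorr (rho_BC psi) + 3 * complex.Re (fq (vBC (pC psi)))
  = 2 * complex.Re (Nn (pC psi)) ^+ 2
    + 2 * complex.Re (detA (pC psi) + detB (pC psi) + detC (pC psi)).
Proof.
rewrite !SBC_E Refq !ReDx /detB /detC !ReNx !ReMx !Re_gA !Im_gA Re_Nn.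
rewrite /PBC00 /PBC01 /PBC02 /PBC10 /PBC11 /PBC12 /PBC20 /PBC21 /PBC22 /RTT /ITT /Rg /Ig !sum2m.
rewrite /xr /yr /pC /swAB /swAC /=.
ring.
Qed.

Lemma conjE (x : C) : Num.conj x = conjc x.
Proof. by []. Qed.

End P6.

Section P7.
Variable R : realType.
Local Notation C := R[i].
Implicit Types psi : 'I_2 -> 'I_2 -> 'I_2 -> C.

Lemma case_bound phi (S1 S2 : R) :
  S1 + S2 + 3 * complex.Re (fq (vBC phi))
    = 2 * complex.Re (Nn phi) ^+ 2 + 2 * complex.Re (detA phi + detB phi + detC phi) ->
  complex.Re (Nn phi) = 1 ->
  S1 + S2 + 3 * concurrence (red_state (vBC phi)) ^+ 2 <= 10 / 3.
Proof.
move=> hid hN.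
have hc := conc_bound (vBC phi); rewrite dq_vBC in hc.
have hP := Phi_le0 phi; rewrite /Phi hN in hP.
rewrite hN in hid.
lra.
Qed.

Lemma Nn_swAB psi : Nn (swAB psi) = Nn psi.
Proof. by rewrite /Nn /swAB !sum2; ring. Qed.
Lemma Nn_pC psi : Nn (pC psi) = Nn psi.
Proof. by rewrite /Nn /pC !sum2; ring. Qed.

Lemma max_min_bound (sAB sAC sBC cAB cAC cBC : R) :
  sAB + sAC + 3 * cBC <= 10 / 3 -> sAB + sBC + 3 * cAC <= 10 / 3 ->
  sAC + sBC + 3 * cAB <= 10 / 3 ->
  Num.max (sAB + sAC) (Num.max (sAB + sBC) (sAC + sBC))
    + 3 * Num.min cAB (Num.min cAC cBC) <= 10 / 3.
Proof.
move=> h1 h2 h3.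
have m1 : Num.min cAB (Num.min cAC cBC) <= cBC by rewrite !ge_min lexx ?orbT ?orTb.
have m2 : Num.min cAB (Num.min cAC cBC) <= cAC by rewrite !ge_min lexx ?orbT ?orTb.
have m3 : Num.min cAB (Num.min cAC cBC) <= cAB by rewrite !ge_min lexx ?orbT ?orTb.
move: m1 m2 m3; set m := Num.min _ _ => m1 m2 m3.
rewrite -lerBrDr !ge_max; apply/andP; split; [|apply/andP; split]; rewrite lerBrDr; lra.
Qed.

Lemma final psi : unit_state psi ->
  S_total_max psi + 3 * E_W psi <= 10 / 3.
Proof.
move=> hu.
have hN0 : Nn psi = 1.
  rewrite -hu /Nn; apply: eq_bigr => a _; apply: eq_bigr => b _; apply: eq_bigr => c _.
  by rewrite conjE.
have hN : complex.Re (Nn psi) = 1 by rewrite hN0.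
have c1 := case_bound (ident1 psi) hN.
have hN2 : complex.Re (Nn (swAB psi)) = 1 by rewrite Nn_swAB.
have hN3 : complex.Re (Nn (pC psi)) = 1 by rewrite Nn_pC.
have c2 := case_bound (ident2 psi) hN2.
have c3 := case_bound (ident3 psi) hN3.
exact: (max_min_bound c1 c2 c3).
Qed.
End P7.

Close Scope complex_scope.
Unset Implicit Arguments.

Theorem theorem6 (R : realType) (psi : 'I_2 -> 'I_2 -> 'I_2 -> R[i]) :
  unit_state psi ->
  S_total_max psi + 3 * E_W psi <= 10 / 3.
Proof. exact: final. Qed.
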